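(* Let $m,d\in\mathbb N$. Let $G$ be an $m$-joined graph and let $W\subseteq V(G)$ satisfy $|W|\ge (3d+4)m$. Then there is a set $B\subseteq V(G)$ with $|B|\le m$ such that every $U\subseteq V(G)\setminus B$ with $|U|\le 2m$ satisfies $|N(U,W\setminus B)|\ge d|U|$.
   Context: A graph $G$ is $m$-joined if there is an edge between any two disjoint vertex sets each containing at least $m$ vertices. For $U\subseteq V(G)$, $N(U)=\big(\bigcup_{u\in U}N(u)\big)\setminus U$ is the exterior neighbourhood, and $N(U,W)=N(U)\cap W$. *)

(* Defs.v *)
From mathcomp Require Import all_boot.
Set Implicit Arguments. Unset Strict Implicit. Unset Printing Implicit Defensive.

Definition simple_graph (T : finType) (e : rel T) : Prop :=
  symmetric e /\ irreflexive e.

Definition m_joined (T : finType) (e : rel T) (m : nat) : Prop :=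
  forall A B : {set T}, [disjoint A & B] -> m <= #|A| -> m <= #|B| ->
    exists x, exists y, [/\ x \in A, y \in B & e x y].

Definition ext_nbhd (T : finType) (e : rel T) (U : {set T}) : {set T} :=
  [set v | [exists u in U, e u v]] :\: U.

Definition nbhd_in (T : finType) (e : rel T) (U W : {set T}) : {set T} :=
  ext_nbhd e U :&: W.

(* Main.v *)
Require Import Defs.
From mathcomp Require Import all_boot.
From mathcomp Require Import zify.
From Stdlib Require Import Classical.

Lemma nbhd_union (T : finType) (e : rel T) (B U W : {set T}) :
  nbhd_in e (B :|: U) W \subset nbhd_in e B W :|: nbhd_in e U (W :\: B).
Proof.
apply/subsetP => v; rewrite /nbhd_in /ext_nbhd !inE.
case/andP=> /andP[vBU /existsP[u /andP[uBU euv]]] vW.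
move: vBU; rewrite negb_or => /andP[vB vU].
move: uBU; rewrite inE => /orP[uB|uU].
- apply/orP; left; rewrite vB vW andbT /=; apply/existsP; exists u; by rewrite uB.
- apply/orP; right; rewrite vU vB vW /= andbT; apply/existsP; exists u; by rewrite uU.
Qed.

Lemma card_union_le (T : finType) (A B : {set T}) : #|A :|: B| <= #|A| + #|B|.
Proof. rewrite cardsU; lia. Qed.

Lemma step (T : finType) (e : rel T) (m d : nat)
  (hJ : m_joined e m) (W : {set T})
  (hW : (3 * d + 4) * m <= #|W|) (B : {set T}) (hB : #|B| <= m)
  (hP : #|nbhd_in e B W| <= d * #|B|) :
  (forall U : {set T}, U \subset ~: B -> #|U| <= 2 * m ->
      d * #|U| <= #|nbhd_in e U (W :\: B)|) \/
  exists B' : {set T}, [/\ #|B| < #|B'|, #|B'| <= m & #|nbhd_in e B' W| <= d * #|B'|].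
Proof.
destruct (classic (forall U : {set T}, U \subset ~: B -> #|U| <= 2 * m ->
      d * #|U| <= #|nbhd_in e U (W :\: B)|)) as [Hall|Hnot]; first by left.
right; apply: NNPP => Hno; apply: Hnot => U hUB hU2; rewrite leqNgt; apply/negP => hlt.
set B' := B :|: U.
have dis : B :&: U = set0.
  apply/setP => x; rewrite !inE; apply/negP => /andP[xB xU].
  by move/subsetP: hUB => /(_ x xU); rewrite inE xB.
have cB' : #|B'| = #|B| + #|U| by rewrite /B' cardsU dis cards0 subn0.
have hN : #|nbhd_in e B' W| <= d * #|B'|.
  have k1 := subset_leq_card (@nbhd_union T e B U W).
  have k2 := @card_union_le T (nbhd_in e B W) (nbhd_in e U (W :\: B)).
  rewrite cB' /B'; nia.
clearbody B'.
have Upos : 0 < #|U| by case: (#|U|) hlt => //; rewrite muln0.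
have [hle|hgt] := leqP #|B'| m.
  by apply: Hno; exists B'; split => //; lia.
set R := W :\: (B' :|: nbhd_in e B' W).
have cR : m <= #|R|.
  rewrite /R cardsD.
  have h1 := subset_leq_card (subsetIr W (B' :|: nbhd_in e B' W)).
  have h2 := @card_union_le T B' (nbhd_in e B' W).
  have h3 : d * #|B'| <= d * (3 * m) by apply: leq_mul => //; lia.
  nia.
have disj : [disjoint B' & R].
  rewrite -setI_eq0; apply/eqP/setP => x; rewrite /R !inE.
  by case: (x \in B') => //=; rewrite andbF.
have [x [y [xB yR exy]]] := hJ B' R disj (ltnW hgt) cR.
move: yR; rewrite /R !inE negb_or => /andP[/andP[yB' yN] yW].
move: yN; rewrite yB' yW /= andbT.
by move/negP; apply; apply/existsP; exists x; rewrite xB.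
Qed.

Theorem proposition3p35 (T : finType) (e : rel T) (m d : nat)
  (hG : simple_graph e) (hJ : m_joined e m) (W : {set T})
  (hW : (3 * d + 4) * m <= #|W|) :
  exists B : {set T}, #|B| <= m /\
    forall U : {set T}, U \subset ~: B -> #|U| <= 2 * m ->
      d * #|U| <= #|nbhd_in e U (W :\: B)|.
Proof.
suff H : forall n (B : {set T}), m - #|B| <= n -> #|B| <= m ->
  #|nbhd_in e B W| <= d * #|B| ->
  exists B : {set T}, #|B| <= m /\
    forall U : {set T}, U \subset ~: B -> #|U| <= 2 * m ->
      d * #|U| <= #|nbhd_in e U (W :\: B)|.
{ apply: (H m set0); rewrite ?cards0 ?subn0 //.
  suff -> : nbhd_in e set0 W = set0 by rewrite cards0.
  apply/setP => v; rewrite /nbhd_in /ext_nbhd !inE.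
  case: existsP => //= [[u]]; by rewrite inE. }
elim=> [|n IH] B hn hB hP.
- case: (@step T e m d hJ W hW B hB hP) => [H|[B' [h1 h2 h3]]]; first by exists B.
  lia.
- case: (@step T e m d hJ W hW B hB hP) => [H|[B' [h1 h2 h3]]]; first by exists B.
  apply: (IH B') => //; lia.
Qed.
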